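(* Let $C$ be a binary $[n,k]$ code with $C^\perp\neq\{\bm 0\}$ and $3<d(C^\perp)<k+1$. Then $\gamma(C)\le k-d(C^\perp)+2$.
   Context: An $[n,k]$ code over $\mathbb{F}_q$ is a $k$-dimensional subspace $C\subseteq\mathbb{F}_q^n$; binary means $q=2$; write $E=\{1,\dots,n\}$. For $\bm{x}\in\mathbb{F}_q^n$, $\mathrm{supp}(\bm{x})=\{i: x_i\neq 0\}$ and the weight is $|\mathrm{supp}(\bm{x})|$; for $B\subseteq\mathbb{F}_q^n$, $\mathrm{Supp}(B)=\bigcup_{\bm{x}\in B}\mathrm{supp}(\bm{x})$. $C^\perp$ is the dual code with respect to the standard inner product and $d(C^\perp)$ is the minimum weight of a nonzero codeword of $C^\perp$. The covering dimension is $\gamma(C)=\infty$ if $\mathrm{Supp}(C)\neq E$, and otherwise $\gamma(C)$ is the least positive integer $r$ such that $C$ has an $r$-dimensional subspace $D$ with $\mathrm{Supp}(D)=E$. *)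

(* Defs.v *)
(* Binary codes are represented as row spaces of matrices
   over 'F_2 (mxalgebra): a code C of length n is the row space of
   C : 'M['F_2]_n; its dimension is \rank C. *)
From HB Require Import structures.
From mathcomp Require Import all_boot all_order all_algebra all_fingroup all_field.
Set Implicit Arguments. Unset Strict Implicit. Unset Printing Implicit Defensive.
Import GRing.Theory.
Local Open Scope ring_scope.

Definition supp {n : nat} (x : 'rV['F_2]_n) : {set 'I_n} :=
  [set i | x 0 i != 0].

Definition wt {n : nat} (x : 'rV['F_2]_n) : nat := #|supp x|.

Definition Supp {m n : nat} (B : 'M['F_2]_(m, n)) : {set 'I_n} :=
  [set i | [exists x : 'rV['F_2]_n, (x <= B)%MS && (x 0 i != 0)]].

Definition dual {n : nat} (C : 'M['F_2]_n) : 'M['F_2]_n := kermx C^T.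

(* minimum weight of a nonzero codeword of the row space of C
   (meaningful when the code is nonzero; default value n otherwise) *)
Definition min_wt {n : nat} (C : 'M['F_2]_n) : nat :=
  (\big[minn/n]_(x : 'rV['F_2]_n | (x <= C)%MS && (x != 0%R)) wt x)%N.

(* covering dimension: None encodes infinity *)
Definition covering_dim {n : nat} (C : 'M['F_2]_n) : option nat :=
  if Supp C != setT then None
  else Some (\big[minn/n]_(r < n.+1 |
          (0 < (r : nat))%N &&
          [exists D : 'M['F_2]_n,
             [&& (D <= C)%MS, \rank D == r & Supp D == setT]]) (r : nat))%N.

(* Main.v *)
Require Import Defs.
From HB Require Import structures.
From mathcomp Require Import all_boot all_order all_algebra all_fingroup all_field.
From mathcomp Require Import zify.
From mathcomp Require Import ring.
Set Implicit Arguments. Unset Strict Implicit. Unset Printing Implicit Defensive.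
Import GRing.Theory.
Local Open Scope ring_scope.

Lemma F2_cases (a : 'F_2) : a = 0 \/ a = 1.
Proof. by case: a => -[|[|]] //= Ha; [left|right]; apply/val_inj. Qed.

Lemma F2_add_self (a : 'F_2) : a + a = 0.
Proof. case: (F2_cases a) => ->; first by rewrite addr0. by apply/val_inj. Qed.

Lemma F2_neq0 (a : 'F_2) : a != 0 -> a = 1.
Proof. by case: (F2_cases a) => ->; rewrite ?eqxx. Qed.

Lemma F2_oppr (a : 'F_2) : - a = a.
Proof. by apply/eqP; rewrite eq_sym -subr_eq0 opprK F2_add_self. Qed.
Lemma rank_sum_le (F : fieldType) (I : finType) (P : pred I) m n (B : I -> 'M[F]_(m, n)) :
  (\rank (\sum_(i | P i) B i)%R <= \sum_(i | P i) \rank (B i))%N.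
Proof.
apply: (big_ind2 (fun x y => \rank x <= y)%N) => //.
  by rewrite mxrank0.
move=> x1 x2 y1 y2 h1 h2; apply: leq_trans (mxrank_add _ _) _; exact: leq_add.
Qed.

Lemma mul_delta_diag (F : fieldType) m n (A : 'M[F]_(m, n)) (j k : 'I_n) i :
  (A *m delta_mx j j) i k = A i j * (j == k)%:R.
Proof.
rewrite !mxE (bigD1 j) //= mxE eqxx /= (eq_sym k j) big1 ?addr0 // => l /negbTE hl.
rewrite mxE; case: eqP => [elj|_]; [by rewrite elj eqxx in hl|by rewrite mulr0].
Qed.

Lemma rank_cols (F : fieldType) m n (A : 'M[F]_(m, n)) (S : {set 'I_n}) :
  (forall i j, j \notin S -> A i j = 0) -> (\rank A <= #|S|)%N.
Proof.
move=> hA.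
have -> : A = \sum_(j in S) (A *m delta_mx j j).
  apply/matrixP=> i k; rewrite summxE.
  have [kS|kS] := boolP (k \in S).
    rewrite (bigD1 k) //= mul_delta_diag eqxx mulr1 big1 ?addr0 // => j /andP [_ hj].
    by rewrite mul_delta_diag (negbTE hj) mulr0.
  rewrite hA // big1 // => j jS; rewrite mul_delta_diag.
  by case: eqP => [ej|]; [rewrite -ej jS in kS|rewrite mulr0].
apply: leq_trans (rank_sum_le (mem S) (fun j => A *m delta_mx j j)) _.
rewrite -sum1_card; apply: leq_sum => j _.
by apply: leq_trans (mxrankM_maxr _ _) _; rewrite mxrank_delta.
Qed.

Lemma nat_F2 (m : nat) : (m%:R : 'F_2) = (odd m)%:R.
Proof.
rewrite -{1}(odd_double_half m) natrD -muln2 natrM.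
have -> : (2%:R : 'F_2) = 0 by apply/val_inj.
by rewrite mulr0 addr0.
Qed.

Lemma odd_F2 (m : nat) : ((m%:R : 'F_2) == 0) = ~~ odd m.
Proof. by rewrite nat_F2; case: (odd m) => //=; rewrite oner_eq0. Qed.

Lemma sum_F2 n (x : 'rV['F_2]_n) : \sum_i x 0 i = (wt x)%:R.
Proof.
rewrite (bigID (fun i => x 0 i != 0)) /= [X in _ + X]big1; last first.
  by move=> i /negbNE /eqP.
rewrite addr0 (eq_bigr (fun _ => 1)); last by move=> i /F2_neq0.
by rewrite sumr_const /wt /supp cardsE.
Qed.

Lemma in_supp n (x : 'rV['F_2]_n) i : (i \in supp x) = (x 0 i != 0).
Proof. by rewrite inE. Qed.

Lemma supp_val n (x : 'rV['F_2]_n) i : x 0 i = (i \in supp x)%:R.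
Proof.
rewrite in_supp; case: (boolP (x 0 i != 0)) => [/F2_neq0 -> //|/negbNE/eqP -> //].
Qed.

Lemma wt_add n (x y : 'rV['F_2]_n) : (wt (x + y) <= wt x + wt y)%N.
Proof.
rewrite /wt; apply: leq_trans (leq_card_setU _ _).
apply: subset_leq_card; apply/subsetP => i; rewrite !in_supp inE !in_supp mxE.
by apply: contraR; rewrite negb_or !negbK => /andP [/eqP -> /eqP ->]; rewrite addr0.
Qed.

Lemma wt_eq0 n (x : 'rV['F_2]_n) : wt x = 0%N -> x = 0.
Proof.
move/cards0_eq => h; apply/matrixP => i j; rewrite (ord1 i) mxE.
by apply/eqP; apply: contraT; rewrite -in_supp h inE.
Qed.

Lemma supp_delta n (i : 'I_n) : supp (delta_mx 0 i : 'rV['F_2]_n) = [set i].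
Proof.
apply/setP => j; rewrite in_supp inE mxE /= eq_sym.
by case: (j == i); rewrite ?oner_eq0 ?eqxx.
Qed.

Lemma wt_delta n (i : 'I_n) : wt (delta_mx 0 i : 'rV['F_2]_n) = 1%N.
Proof. by rewrite /wt supp_delta cards1. Qed.

Lemma addmx_self n (x : 'rV['F_2]_n) : x + x = 0.
Proof. by apply/matrixP => i j; rewrite !mxE F2_add_self. Qed.

HB.instance Definition _ := SemiGroup.isComLaw.Build nat minn minnA minnC.

Lemma oppmx_F2 m n (x : 'M['F_2]_(m, n)) : - x = x.
Proof. by apply/matrixP => i j; rewrite !mxE F2_oppr. Qed.

Lemma bigmin_le_cond (I : finType) (P : pred I) (F : I -> nat) x0 i :
  P i -> (\big[minn/x0]_(j | P j) F j <= F i)%N.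
Proof. by move=> Pi; rewrite (bigD1 i) //= geq_minl. Qed.

Lemma bigmin_att (I : finType) (P : pred I) (F : I -> nat) x0 :
  \big[minn/x0]_(j | P j) F j = x0 \/
  exists2 i, P i & \big[minn/x0]_(j | P j) F j = F i.
Proof.
apply: (big_ind (fun v => v = x0 \/ exists2 i, P i & v = F i)).
- by left.
- move=> a b ha hb.
  have [->|->] : minn a b = a \/ minn a b = b by rewrite /minn; case: ifP; [left|right].
  + exact: ha.
  + exact: hb.
- by move=> i Pi; right; exists i.
Qed.

Lemma double_perp n (A : 'M['F_2]_n) : (kermx (kermx A^T)^T == A)%MS.
Proof.
have sub : (A <= kermx (kermx A^T)^T)%MS.
  by apply/sub_kermxP; rewrite -[A]trmxK -trmx_mul trmxK mulmx_ker trmx0.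
rewrite sub andbT -(mxrank_leqif_sup sub).
by rewrite !mxrank_ker !mxrank_tr mxrank_ker mxrank_tr subKn // rank_leq_col.
Qed.

Lemma sum_delta n (x : 'rV['F_2]_n) j : \sum_i x 0 i * (i == j)%:R = x 0 j.
Proof.
rewrite (bigD1 j) //= eqxx mulr1 big1 ?addr0 // => i /negbTE ->; exact: mulr0.
Qed.

Definition Kmat n (P : {set 'I_n}) (b c : 'I_n) (d : nat) : 'M['F_2]_n :=
  \matrix_(i, j) (if j \notin P then (i == j)%:R
                  else if j == b then (i == b)%:R + (i == c)%:R
                  else if j == c then 1 + d%:R * (i == c)%:R else 0).

Section K.
Variables (n d : nat) (P : {set 'I_n}) (b c : 'I_n).
Hypotheses (bP : b \in P) (cP : c \in P) (bc : b != c) (cardP : #|P| = d).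

Lemma K_constraints (x : 'rV['F_2]_n) : (x <= kermx (Kmat P b c d))%MS ->
  [/\ forall j, j \notin P -> x 0 j = 0, x 0 b = x 0 c &
      (wt x)%:R + d%:R * x 0 c = 0 :> 'F_2].
Proof.
move=> /sub_kermxP /matrixP h.
have hj j : \sum_i x 0 i * Kmat P b c d i j = 0.
  by move: (h 0 j); rewrite !mxE.
split.
- move=> j jP; move: (hj j).
  by under eq_bigr => i _ do rewrite mxE (negbTE jP) /=; rewrite sum_delta.
- move: (hj b); under eq_bigr => i _ do rewrite mxE bP /= eqxx mulrDr.
  rewrite big_split /= !sum_delta => /eqP; rewrite addr_eq0 F2_oppr.
  by move/eqP.
- move: (hj c); under eq_bigr => i _ do rewrite mxE cP /= (negbTE (negbT (introF eqP (fun e => (negP bc) (introT eqP (esym e)))))) eqxx mulrDr mulr1.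
  rewrite big_split /= sum_F2.
  under eq_bigr => i _ do rewrite mulrCA.
  by rewrite -mulr_sumr sum_delta.
Qed.

Lemma K_rank : (\rank (Kmat P b c d) <= #|~: P| + 2)%N.
Proof.
apply: (leq_trans (rank_cols (S := ~: P :|: [set b; c]) _)).
  move=> i j; rewrite !inE negb_or negbK => /andP [jP]; rewrite negb_or => /andP [jb jc].
  by rewrite mxE jP /= (negbTE jb) (negbTE jc).
apply: leq_trans (leq_card_setU _ _) _.
by rewrite leq_add2l cards2; case: (b != c).
Qed.

Lemma W_weight (x : 'rV['F_2]_n) : (x <= kermx (Kmat P b c d))%MS ->
  wt x != 1%N /\ ((wt x <= d - 2)%N \/ supp x = P).
Proof.
move=> /K_constraints [h1 h2 h3].
have e2 : #|[set b; c]| = 2%N by rewrite cards2 bc.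
have suppP : supp x \subset P.
  apply/subsetP => j; rewrite in_supp; apply: contraR => jP; rewrite h1 //.
case: (F2_cases (x 0 c)) => xc.
- rewrite xc mulr0 addr0 in h3; move/eqP: h3; rewrite odd_F2 => h3.
  split; first by apply: contraNneq h3 => ->.
  left; rewrite -cardP -e2.
  have : supp x \subset P :\: [set b; c].
    apply/subsetP => j jx; rewrite !inE (subsetP suppP) // andbT.
    by apply/negP => /orP [] /eqP ej; move: jx; rewrite in_supp ej ?h2 xc eqxx.
  move/subset_leq_card; rewrite cardsDS //.
  by apply/subsetP => j; rewrite !inE => /orP [] /eqP ->.
- rewrite xc mulr1 -natrD in h3; move/eqP: h3; rewrite odd_F2 oddD => h3.
  have bcx : [set b; c] \subset supp x.
    by apply/subsetP => j; rewrite !inE => /orP [] /eqP ->; rewrite ?in_supp ?h2 xc oner_eq0.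
  have w2 : (2 <= wt x)%N by rewrite /wt -e2; exact: subset_leq_card.
  split; first by rewrite neq_ltn w2 orbT.
  have wd : (wt x <= d)%N by rewrite -cardP; exact: subset_leq_card.
  have [wd'|wd'] := leqP (wt x) (d - 2).
    by left.
  have [ed|ned] := eqVneq (wt x) d.
    right; apply/eqP; rewrite eqEcard suppP cardP -ed leqnn //.
  exfalso.
  have e1 : wt x = d.-1 by lia.
  have [d' ed'] : exists d', d = d'.+1 by exists d.-1; lia.
  by move: h3; rewrite e1 ed' /=; case: (odd d').
Qed.
End K.

Lemma arith1 (a b c d : nat) : (3 < d)%N -> (d <= a)%N -> (a <= b + c)%N -> (b <= d - 2)%N -> (c <= 1)%N -> False.
Proof. lia. Qed.

Lemma arith2 (a b c d : nat) : (3 < d)%N -> (d <= a)%N -> (a <= b + c)%N -> b = 2%N -> (c <= 1)%N -> False.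
Proof. lia. Qed.

Theorem mainTheorem8 (n : nat) (C : 'M['F_2]_n) :
  dual C != 0%R ->
  (3 < min_wt (dual C) < \rank C + 1)%N ->
  exists g : nat, covering_dim C = Some g /\ (g <= \rank C - min_wt (dual C) + 2)%N.
Proof.
move=> hdual /andP [hd3 hdk].
have rdual : \rank (dual C) = (n - \rank C)%N by rewrite /dual mxrank_ker mxrank_tr.
have rCn := rank_leq_col C.
have kn : (\rank C < n)%N.
  have : \rank (dual C) != 0%N by rewrite mxrank_eq0.
  rewrite rdual; lia.
set d := min_wt (dual C) in hd3 hdk *.
set k := \rank C in hdk rdual rCn kn *.
have F1 : forall y : 'rV_n, (y <= dual C)%MS -> y != 0 -> (d <= wt y)%N.
  by move=> y hy ny; rewrite /d /min_wt; apply: bigmin_le_cond; rewrite hy ny.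
have [z [hz nz wz]] : exists z : 'rV_n, [/\ (z <= dual C)%MS, z != 0 & wt z = d].
  case: (bigmin_att (fun x : 'rV['F_2]_n => (x <= dual C)%MS && (x != 0)) (@wt n) n)
    => [h|[z /andP [h1 h2] h3]].
  - exfalso; move: hdk; rewrite /d /min_wt h; lia.
  - by exists z; split.
set T := supp z.
have cardT : #|T| = d by [].
have [t tT] : exists t, t \in T by apply/card_gt0P; rewrite cardT; lia.
have [b bT] : exists b, b \in T :\ t.
  apply/card_gt0P; move: cardT; rewrite (cardsD1 t) tT; lia.
have [c cT] : exists c, c \in ~: T.
  apply/card_gt0P; move: (cardsC T); rewrite card_ord cardT; lia.
set P := c |: (T :\ t).
have cardP : #|P| = d.
  rewrite /P cardsU1; move: cardT; rewrite (cardsD1 t) tT.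
  by move: cT; rewrite !inE => /negbTE ->; rewrite andbF.
have bP : b \in P by rewrite /P inE bT orbT.
have cP : c \in P by rewrite /P !inE eqxx.
have bc : b != c.
  by apply: contraTneq cT => <-; rewrite inE negbK; move: bT; rewrite inE => /andP [].
set K := Kmat P b c d.
set W := kermx K.
have rW : (d - 2 <= \rank W)%N.
  rewrite /W /K mxrank_ker; have := @K_rank n d P b c; have := cardsC P.
  rewrite card_ord cardP; lia.
have tc : t != c by apply: contraTneq cT => <-; rewrite inE negbK.
have tP : t \notin P by rewrite /P !inE eqxx /= (negbTE tc).
have cTn : c \notin T by move: cT; rewrite inE.
have key : forall x y : 'rV_n, (x <= W)%MS -> (wt y <= 1)%N ->
    ((x + y)%R <= dual C)%MS -> x + y = 0.
  move=> x y xW wy hxy; apply/eqP; apply: contraT => nxy.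
  have [w1 [wle|sP]] := W_weight bP cP bc cardP xW.
    by case: (arith1 hd3 (F1 _ hxy nxy) (wt_add x y) wle wy).
  have hv : ((x + z + y)%R <= dual C)%MS by rewrite addrAC addmx_sub.
  have xval : forall j, x 0 j = (j \in P)%:R by move=> j; rewrite supp_val sP.
  have zval : forall j, z 0 j = (j \in T)%:R by move=> j; rewrite supp_val.
  have sxz : supp (x + z) = [set t; c].
    apply/setP => j; rewrite in_supp mxE xval zval in_set2 /P in_setU1 in_setD1.
    have [->|jt] := eqVneq j t; first by rewrite (negbTE tc) tT.
    have [->|jc] := eqVneq j c; first by rewrite (negbTE cTn) addr0 oner_eq0.
    by rewrite /=; case: (j \in T); rewrite ?addr0 ?F2_add_self eqxx.
  have wxz : wt (x + z) = 2%N by rewrite /wt sxz cards2 tc.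
  have nv : x + z + y != 0.
    apply: contraTneq wy => ev.
    have ey : y = x + z.
      apply/matrixP => i j; move/matrixP: ev => /(_ i j); rewrite !mxE => ev.
      have e : y i j = (x i j + z i j + y i j) + (x i j + z i j).
        by rewrite addrAC F2_add_self add0r.
      by rewrite e ev add0r.
    by rewrite ey wxz.
  by case: (arith2 hd3 (F1 _ hv nv) (wt_add (x + z) y) wxz wy).
set U := (W + dual C)%MS.
set D := kermx U^T.
have DC : (D <= C)%MS.
  have [M eM] : exists M, dual C = M *m U by apply/submxP; exact: addsmxSr.
  have DK : (D <= kermx (dual C)^T)%MS.
    by apply/sub_kermxP; rewrite eM trmx_mul mulmxA mulmx_ker mul0mx.
  by apply: submx_trans DK _; case/andP: (double_perp C).
have cap0 : \rank (W :&: dual C)%MS = 0%N.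
  apply/eqP; rewrite mxrank_eq0; apply/eqP/row_matrixP => r; rewrite row0.
  have h1 : (row r (W :&: dual C)%MS <= W)%MS by apply: submx_trans (row_sub _ _) (capmxSl _ _).
  have h2 : (row r (W :&: dual C)%MS <= dual C)%MS by apply: submx_trans (row_sub _ _) (capmxSr _ _).
  have := key _ 0 h1; rewrite /wt.
  have -> : supp (0 : 'rV['F_2]_n) = set0 by apply/setP => j; rewrite in_supp mxE eqxx inE.
  by rewrite cards0 addr0 => /(_ isT h2).
have rU : \rank U = (\rank W + (n - k))%N.
  by have := mxrank_sum_cap W (dual C); rewrite cap0 addn0 rdual.
have rD : \rank D = (n - \rank U)%N by rewrite /D mxrank_ker mxrank_tr.
have DU : forall e : 'rV_n, (e <= kermx D^T)%MS -> (e <= U)%MS.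
  by move=> e eD; apply: submx_trans eD _; case/andP: (double_perp U).
clearbody D.
have SuppD : forall i, exists x : 'rV_n, (x <= D)%MS /\ x 0 i != 0.
  move=> i.
  suff /existsP [x /andP [h1 h2]] : [exists x : 'rV['F_2]_n, (x <= D)%MS && (x 0 i != 0)] by exists x.
  apply: contraT; rewrite negb_exists => /forallP hall.
  set e := (delta_mx 0 i : 'rV['F_2]_n).
  have eD : (e <= kermx D^T)%MS.
    apply/sub_kermxP/matrixP => r s0; rewrite (ord1 r) !mxE.
    rewrite (bigD1 i) //= big1 => [|j /negbTE ji]; last by rewrite !mxE ji /= mul0r.
    rewrite !mxE !eqxx mul1r addr0.
    by have := hall (row s0 D); rewrite row_sub /= mxE negbK => /eqP.
  have eU : (e <= U)%MS by apply: DU.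
  case/sub_addsmxP: eU => u eu.
  have xW : (u.1 *m W <= W)%MS by exact: submxMl.
  have hw : ((u.1 *m W + e)%R <= dual C)%MS.
    by rewrite eu addrA addmx_self add0r submxMl.
  have := key _ e xW; rewrite wt_delta => /(_ isT hw) /eqP.
  rewrite addr_eq0 => /eqP ex.
  have [w1 _] := W_weight bP cP bc cardP xW.
  by move: w1; rewrite ex oppmx_F2 wt_delta.
have SuppDT : Supp D == setT.
  apply/eqP/setP => i; rewrite inE in_setT; apply/existsP.
  by have [x [h1 h2]] := SuppD i; exists x; rewrite h1 h2.
have SuppCT : Supp C == setT.
  apply/eqP/setP => i; rewrite inE in_setT; apply/existsP.
  by have [x [h1 h2]] := SuppD i; exists x; rewrite (submx_trans h1 DC) h2.
have rD0 : (0 < \rank D)%N.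
  rewrite lt0n mxrank_eq0; have [x [h1 h2]] := SuppD t.
  apply: contraNneq h2 => D0; move: h1; rewrite D0 submx0 => /eqP ->; rewrite mxE.
  by [].
have rDn : (\rank D < n.+1)%N by rewrite ltnS rank_leq_col.
have rDle : (\rank D <= k - d + 2)%N.
  have hUn : (\rank U <= n)%N by rewrite rank_leq_col.
  move: rD rU hUn rW rCn hdk; clear; lia.
rewrite /covering_dim SuppCT /=.
eexists; split; first reflexivity.
apply: leq_trans rDle.
apply: (@bigmin_le_cond _ _ (fun r : 'I_n.+1 => (r : nat)) n (Ordinal rDn)).
rewrite /= rD0 /=; apply/existsP; exists D; rewrite DC eqxx /=.
exact: SuppDT.
Qed.
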